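(* Let $N\ge1$, $\lambda_1,\dots,\lambda_N$ distinct, $\mu_1,\dots,\mu_N$ nonzero constants, $B=\mathrm{diag}(\mu_j)$. If $P_i,Q_i$ ($i=1,2,3$) solve the nonlinearized spatial system (defined below), then there exist $N$ integrals of motion $\alpha_0,\dots,\alpha_{N-1}$ of that system such that \[q=\sqrt2(\langle P_1,BQ_2\rangle+\langle P_2,BQ_3\rangle),\qquad r=\sqrt2(\langle P_2,BQ_1\rangle+\langle P_3,BQ_2\rangle)\] solve the $N$-th order stationary AKNS equation \[K_N+\sum_{i=0}^{N-1}\alpha_iK_i=0.\]
   Context: Potential $u=(q,r)^T$; $U(u,\lambda)=\begin{pmatrix}-2\lambda&\sqrt2 q&0\\ \sqrt2 r&0&\sqrt2 q\\ 0&\sqrt2 r&2\lambda\end{pmatrix}$. Differential polynomials $a_i,b_i,c_i$ in $q,r$ and their $x$-derivatives: $a_0=-1$, $b_0=c_0=0$, and for $i\ge0$, $a_{i+1}=\frac12\partial^{-1}(q c_{i,x}+r b_{i,x})$, $b_{i+1}=-\frac12 b_{i,x}-q a_i$, $c_{i+1}=\frac12 c_{i,x}-r a_i$ ($\partial=d/dx$), with constants of integration fixed by $a_i|_{u=0}=b_i|_{u=0}=c_i|_{u=0}=0$ for $i\ge1$. The AKNS vector fields are $K_n=(-2b_{n+1},\,2c_{n+1})^T$, $n\ge0$. Phase space $\mathbb{R}^{6N}$ with coordinates $\phi_{ij},\psi_{ij}$ ($i=1,2,3$, $j=1,\dots,N$), $P_i=(\phi_{i1},\dots,\phi_{iN})^T$,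 $Q_i=(\psi_{i1},\dots,\psi_{iN})^T$, $\langle\cdot,\cdot\rangle$ the standard inner product on $\mathbb{R}^N$. With $\tilde u=(\tilde q,\tilde r)^T$, $\tilde q=\sqrt2(\langle P_1,BQ_2\rangle+\langle P_2,BQ_3\rangle)$, $\tilde r=\sqrt2(\langle P_2,BQ_1\rangle+\langle P_3,BQ_2\rangle)$, the nonlinearized spatial system is $(\phi_{1j},\phi_{2j},\phi_{3j})^T_x=U(\tilde u,\lambda_j)(\phi_{1j},\phi_{2j},\phi_{3j})^T$, $(\psi_{1j},\psi_{2j},\psi_{3j})^T_x=-U(\tilde u,\lambda_j)^T(\psi_{1j},\psi_{2j},\psi_{3j})^T$, $j=1,\dots,N$. An integral of motion is a function of $P_i,Q_i$ constant along solutions of this system. *)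

(* Defs.v *)
From HB Require Import structures.
From mathcomp Require Import all_boot all_order all_algebra.
From mathcomp Require Import all_classical all_reals all_analysis.
Set Implicit Arguments. Unset Strict Implicit. Unset Printing Implicit Defensive.
Import Order.TTheory GRing.Theory Num.Theory.
Local Open Scope ring_scope.

Section DiffPoly.
Variable R : realType.

(** Differential polynomials in q, r (syntax): DQ k = q^(k), DR k = r^(k). *)
Inductive dpoly : Type :=
| DC of R
| DQ of nat
| DR of nat
| DAdd of dpoly & dpoly
| DMul of dpoly & dpoly.

(** A jet: the values (q^(k))_k and (r^(k))_k. *)
Definition jet := ((nat -> R) * (nat -> R))%type.

Fixpoint deval (J : jet) (p : dpoly) : R :=
  match p with
  | DC c => c
  | DQ k => J.1 k
  | DR k => J.2 k
  | DAdd p1 p2 => deval J p1 + deval J p2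
  | DMul p1 p2 => deval J p1 * deval J p2
  end.

Fixpoint dderiv (p : dpoly) : dpoly :=
  match p with
  | DC _ => DC 0
  | DQ k => DQ k.+1
  | DR k => DR k.+1
  | DAdd p1 p2 => DAdd (dderiv p1) (dderiv p2)
  | DMul p1 p2 => DAdd (DMul (dderiv p1) p2) (DMul p1 (dderiv p2))
  end.

Definition zero_jet : jet := (fun _ => 0, fun _ => 0).

(** (a, b, c) is the sequence of differential polynomials a_i, b_i, c_i of the
    recursion:  a_0 = -1, b_0 = c_0 = 0,
    a_{i+1} = 1/2 d^{-1}(q c_{i,x} + r b_{i,x}),
    b_{i+1} = -1/2 b_{i,x} - q a_i,  c_{i+1} = 1/2 c_{i,x} - r a_i,
    with a_i, b_i, c_i vanishing at u = 0 for i >= 1.  Equalities are equalities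
    of polynomial functions on jets (= equalities of differential polynomials). *)
Definition AKNS_hierarchy (a b c : nat -> dpoly) : Prop :=
  (forall J, deval J (a 0%N) = -1) /\
  (forall J, deval J (b 0%N) = 0) /\
  (forall J, deval J (c 0%N) = 0) /\
  forall i : nat,
    (forall J, deval J (dderiv (a i.+1)) =
       2^-1 * (J.1 0%N * deval J (dderiv (c i)) + J.2 0%N * deval J (dderiv (b i)))) /\
    (forall J, deval J (b i.+1) = - 2^-1 * deval J (dderiv (b i)) - J.1 0%N * deval J (a i)) /\
    (forall J, deval J (c i.+1) = 2^-1 * deval J (dderiv (c i)) - J.2 0%N * deval J (a i)) /\
    deval zero_jet (a i.+1) = 0 /\
    deval zero_jet (b i.+1) = 0 /\
    deval zero_jet (c i.+1) = 0.

Definition jet_at (q r : R -> R) (x : R) : jet :=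
  (fun k => derive1n k q x, fun k => derive1n k r x).

(** Components of the AKNS vector field K_n = (-2 b_{n+1}, 2 c_{n+1})^T at the jet J. *)
Definition K1 (b : nat -> dpoly) (n : nat) (J : jet) : R := - 2 * deval J (b n.+1).
Definition K2 (c : nat -> dpoly) (n : nat) (J : jet) : R := 2 * deval J (c n.+1).

(** The spectral matrix U(u, lambda), indices 0,1,2 standing for 1,2,3. *)
Definition Umat (q r lam : R) : 'M[R]_3 :=
  \matrix_(i < 3, k < 3)
    (if (val i == 0%N) && (val k == 0%N) then - 2 * lam
     else if (val i == 0%N) && (val k == 1%N) then Num.sqrt 2 * q
     else if (val i == 1%N) && (val k == 0%N) then Num.sqrt 2 * r
     else if (val i == 1%N) && (val k == 2%N) then Num.sqrt 2 * q
     else if (val i == 2%N) && (val k == 1%N) then Num.sqrt 2 * r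
     else if (val i == 2%N) && (val k == 2%N) then 2 * lam
     else 0).

(** Phase-space point: phi i j = phi_{i+1, j+1}, psi i j = psi_{i+1, j+1}. *)
Definition phase (N : nat) := ('I_3 -> 'I_N -> R)%type.

Definition qtil (N : nat) (mu : 'I_N -> R) (phi psi : phase N) : R :=
  Num.sqrt 2 * (\sum_(j < N) phi 0 j * (mu j * psi 1 j)
               + \sum_(j < N) phi 1 j * (mu j * psi 2 j)).
Definition rtil (N : nat) (mu : 'I_N -> R) (phi psi : phase N) : R :=
  Num.sqrt 2 * (\sum_(j < N) phi 1 j * (mu j * psi 0 j)
               + \sum_(j < N) phi 2 j * (mu j * psi 1 j)).

Definition spatial_solution (N : nat) (lam mu : 'I_N -> R)
    (phi psi : R -> phase N) (x0 x1 : R) : Prop :=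
  forall x, x0 < x < x1 ->
  let U := fun j => Umat (qtil mu (phi x) (psi x)) (rtil mu (phi x) (psi x)) (lam j) in
  forall (i : 'I_3) (j : 'I_N),
    derivable (fun t => phi t i j) x 1 /\
    derivable (fun t => psi t i j) x 1 /\
    derive1 (fun t => phi t i j) x = \sum_(k < 3) U j i k * phi x k j /\
    derive1 (fun t => psi t i j) x = - \sum_(k < 3) (U j)^T i k * psi x k j.

Definition integral_of_motion (N : nat) (lam mu : 'I_N -> R) (F : phase N -> phase N -> R) : Prop :=
  forall (phi psi : R -> phase N) (x0 x1 : R),
    spatial_solution lam mu phi psi x0 x1 ->
    forall x y, x0 < x < x1 -> x0 < y < x1 ->
      F (phi x) (psi x) = F (phi y) (psi y).

End DiffPoly.

(* Main.v *)
Require Import Defs.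
From HB Require Import structures.
From mathcomp Require Import all_boot all_order all_algebra.
From mathcomp Require Import all_classical all_reals all_analysis.
From mathcomp Require Import ring lra.
Import Order.TTheory GRing.Theory Num.Theory.
Local Open Scope ring_scope.

Section DP.
Context {R : realType}.
Lemma lin_deriv (a w t0 : R) : is_derive t0 1 (fun t => a + t * w) w.
Proof.
have H := is_deriveD (is_derive_cst a t0 1) (is_deriveM (is_derive_id t0 (1:R)) (is_derive_cst w t0 1)).
have E : (fun t => a + t * w) = (cst a + ((@id R) * cst w)) by [].
rewrite E; apply: is_derive_eq H _.
rewrite /= scaler0 !add0r; exact: mulr1.
Qed.

Lemma is_derive_unique (f : R -> R) (t0 : R) (d1 d2 : R) :
  is_derive t0 (1:R) f d1 -> is_derive t0 (1:R) f d2 -> d1 = d2.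
Proof. by case=> _ <-; case=> _ <-. Qed.


Lemma dcurve_deriv (c : R -> jet R) (t0 : R) :
  (forall k, is_derive t0 1 (fun t => (c t).1 k) ((c t0).1 k.+1)) ->
  (forall k, is_derive t0 1 (fun t => (c t).2 k) ((c t0).2 k.+1)) ->
  forall e, is_derive t0 1 (fun t => deval (c t) e) (deval (c t0) (dderiv e)).
Proof.
move=> H1 H2; elim.
- move=> c0 /=; exact: is_derive_cst.
- exact: H1.
- exact: H2.
- move=> x Hx y Hy /=.
  exact: (is_deriveD Hx Hy).
- move=> x Hx y Hy /=.
  have H := is_deriveM Hx Hy.
  have E : (fun t => deval (c t) x * deval (c t) y) =
     ((fun t => deval (c t) x) * (fun t => deval (c t) y)) by [].
  rewrite E; apply: is_derive_eq H _.
  by rewrite /= addrC; congr (_ + _); rewrite mulrC.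
Qed.

Lemma dderiv_resp (e e' : dpoly R) :
  (forall J, deval J e = deval J e') ->
  forall J, deval J (dderiv e) = deval J (dderiv e').
Proof.
move=> Hee' J.
pose c t : jet R := (fun k => J.1 k + t * J.1 k.+1, fun k => J.2 k + t * J.2 k.+1).
have E : c 0 = J.
  rewrite /c; case: J {Hee' c} => J1 J2 /=; congr pair; apply/funext => k; by rewrite mul0r addr0.
have H1 : forall k, is_derive (0:R) (1:R) (fun t => (c t).1 k) ((c 0).1 k.+1).
  by move=> k; rewrite E; exact: lin_deriv.
have H2 : forall k, is_derive (0:R) (1:R) (fun t => (c t).2 k) ((c 0).2 k.+1).
  by move=> k; rewrite E; exact: lin_deriv.
have D1 := @dcurve_deriv c 0 H1 H2 e.
have D2 := @dcurve_deriv c 0 H1 H2 e'.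
rewrite E in D1 D2.
have F : (fun t => deval (c t) e) = (fun t => deval (c t) e').
  by apply/funext => t; apply: Hee'.
rewrite F in D1.
exact: is_derive_unique D1 D2.
Qed.
End DP.

Section PP.
Variable R : realType.
Variable N : nat.
Variables lam mu : 'I_N -> R.

Inductive pp : Type :=
| PC of R
| PX of bool & 'I_3 & 'I_N
| PA of pp & pp
| PM of pp & pp
| PS (n : nat) of ('I_n -> pp).
Arguments PS {n}.

Fixpoint peval (p s : phase R N) (e : pp) : R :=
  match e with
  | PC c => c
  | PX b i j => if b then s i j else p i j
  | PA x y => peval p s x + peval p s y
  | PM x y => peval p s x * peval p s y
  | PS n F => \sum_(j < n) peval p s (F j)
  end.

Definition i0 : 'I_3 := 0.
Definition i1 : 'I_3 := 1.
Definition i2 : 'I_3 := 2.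

Definition qsyn : pp :=
  PM (PC (Num.sqrt 2)) (PA (PS (fun j => PM (PX false i0 j) (PM (PC (mu j)) (PX true i1 j))))
                            (PS (fun j => PM (PX false i1 j) (PM (PC (mu j)) (PX true i2 j))))).
Definition rsyn : pp :=
  PM (PC (Num.sqrt 2)) (PA (PS (fun j => PM (PX false i1 j) (PM (PC (mu j)) (PX true i0 j))))
                            (PS (fun j => PM (PX false i2 j) (PM (PC (mu j)) (PX true i1 j))))).

Lemma qsynE p s : peval p s qsyn = qtil mu p s. Proof. reflexivity. Qed.
Lemma rsynE p s : peval p s rsyn = rtil mu p s. Proof. reflexivity. Qed.

Definition Usyn (j : 'I_N) (i k : 'I_3) : pp :=
    (if (val i == 0%N) && (val k == 0%N) then PC (- 2 * lam j)
     else if (val i == 0%N) && (val k == 1%N) then PM (PC (Num.sqrt 2)) qsyn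
     else if (val i == 1%N) && (val k == 0%N) then PM (PC (Num.sqrt 2)) rsyn
     else if (val i == 1%N) && (val k == 2%N) then PM (PC (Num.sqrt 2)) qsyn
     else if (val i == 2%N) && (val k == 1%N) then PM (PC (Num.sqrt 2)) rsyn
     else if (val i == 2%N) && (val k == 2%N) then PC (2 * lam j)
     else PC 0).

Lemma UsynE p s j i k :
  peval p s (Usyn j i k) = Umat (qtil mu p s) (rtil mu p s) (lam j) i k.
Proof. rewrite mxE /Usyn. by do 6 (case: ifP => _; first by rewrite /= ?qsynE ?rsynE). Qed.

Fixpoint Lie (e : pp) : pp :=
  match e with
  | PC _ => PC 0
  | PX b i j => if b then PM (PC (-1)) (PS (fun k : 'I_3 => PM (Usyn j k i) (PX true k j)))
                else PS (fun k : 'I_3 => PM (Usyn j i k) (PX false k j))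
  | PA x y => PA (Lie x) (Lie y)
  | PM x y => PA (PM (Lie x) y) (PM x (Lie y))
  | PS n F => PS (fun j => Lie (F j))
  end.

Lemma curve_deriv (c1 c2 : R -> phase R N) (t0 : R) :
  (forall b i j, is_derive t0 1 (fun t => peval (c1 t) (c2 t) (PX b i j))
                    (peval (c1 t0) (c2 t0) (Lie (PX b i j)))) ->
  forall e, is_derive t0 1 (fun t => peval (c1 t) (c2 t) e) (peval (c1 t0) (c2 t0) (Lie e)).
Proof.
move=> HX; elim.
- move=> c /=; exact: is_derive_cst.
- exact: HX.
- move=> x Hx y Hy /=.
  exact: (is_deriveD Hx Hy).
- move=> x Hx y Hy /=.
  have H := is_deriveM Hx Hy.
  have E : (fun t => peval (c1 t) (c2 t) x * peval (c1 t) (c2 t) y) =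
     ((fun t => peval (c1 t) (c2 t) x) * (fun t => peval (c1 t) (c2 t) y)) by [].
  rewrite E; apply: is_derive_eq H _.
  by rewrite /= addrC; congr (_ + _); rewrite mulrC.
- move=> n F HF /=.
  have H := is_derive_sum HF.
  have E : (fun t => \sum_(j < n) peval (c1 t) (c2 t) (F j)) =
     (\sum_(j < n) (fun t => peval (c1 t) (c2 t) (F j))).
    by rewrite fct_sumE.
  by rewrite E.
Qed.

Lemma Lie_resp (e e' : pp) :
  (forall p s, peval p s e = peval p s e') ->
  forall p s, peval p s (Lie e) = peval p s (Lie e').
Proof.
move=> Hee' p s.
pose w b i j := peval p s (Lie (PX b i j)).
pose c1 t : phase R N := fun i j => p i j + t * w false i j.
pose c2 t : phase R N := fun i j => s i j + t * w true i j.
have E1 : c1 0 = p by apply/funext => i; apply/funext => j; rewrite /c1 mul0r addr0.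
have E2 : c2 0 = s by apply/funext => i; apply/funext => j; rewrite /c2 mul0r addr0.
have HX : forall b i j, is_derive (0:R) (1:R) (fun t => peval (c1 t) (c2 t) (PX b i j))
                    (peval (c1 0) (c2 0) (Lie (PX b i j))).
  move=> [] i j /=; rewrite E1 E2.
  - exact: (lin_deriv (s i j) (w true i j)).
  - exact: (lin_deriv (p i j) (w false i j)).
have D1 := @curve_deriv c1 c2 0 HX e.
have D2 := @curve_deriv c1 c2 0 HX e'.
rewrite E1 E2 in D1 D2.
have F : (fun t => peval (c1 t) (c2 t) e) = (fun t => peval (c1 t) (c2 t) e').
  by apply/funext => t; apply: Hee'.
rewrite F in D1.
exact: is_derive_unique D1 D2.
Qed.


Definition Asyn j := PA (PM (PX false i0 j) (PX true i0 j)) (PM (PC (-1)) (PM (PX false i2 j) (PX true i2 j))).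
Definition Bsyn j := PM (PC (Num.sqrt 2)) (PA (PM (PX false i0 j) (PX true i1 j)) (PM (PX false i1 j) (PX true i2 j))).
Definition Csyn j := PM (PC (Num.sqrt 2)) (PA (PM (PX false i1 j) (PX true i0 j)) (PM (PX false i2 j) (PX true i1 j))).


Lemma sum3 (F : 'I_3 -> R) : \sum_(k < 3) F k = F i0 + F i1 + F i2.
Proof.
rewrite !big_ord_recr big_ord0 /= add0r.
by congr (F _ + F _ + F _); apply: val_inj.
Qed.

Lemma pevalA p s x y : peval p s (PA x y) = peval p s x + peval p s y. Proof. by []. Qed.
Lemma pevalM p s x y : peval p s (PM x y) = peval p s x * peval p s y. Proof. by []. Qed.
Lemma pevalC p s c : peval p s (PC c) = c. Proof. by []. Qed.
Lemma pevalX0 p s i j : peval p s (PX false i j) = p i j. Proof. by []. Qed.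
Lemma pevalX1 p s i j : peval p s (PX true i j) = s i j. Proof. by []. Qed.
Lemma pevalS p s n (F : 'I_n -> pp) : peval p s (PS F) = \sum_(j < n) peval p s (F j). Proof. by []. Qed.
Lemma LieA p s x y : peval p s (Lie (PA x y)) = peval p s (Lie x) + peval p s (Lie y). Proof. by []. Qed.
Lemma LieM p s x y : peval p s (Lie (PM x y)) =
  peval p s (Lie x) * peval p s y + peval p s x * peval p s (Lie y). Proof. by []. Qed.
Lemma LieC p s c : peval p s (Lie (PC c)) = 0. Proof. by []. Qed.
Lemma LieS p s n (F : 'I_n -> pp) : peval p s (Lie (PS F)) = \sum_(j < n) peval p s (Lie (F j)). Proof. by []. Qed.

Lemma LieX0 p s i j : peval p s (Lie (PX false i j)) =
  Umat (qtil mu p s) (rtil mu p s) (lam j) i i0 * p i0 j +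
  Umat (qtil mu p s) (rtil mu p s) (lam j) i i1 * p i1 j +
  Umat (qtil mu p s) (rtil mu p s) (lam j) i i2 * p i2 j.
Proof. by rewrite [LHS]/= sum3 !UsynE. Qed.
Lemma LieX1 p s i j : peval p s (Lie (PX true i j)) =
  - (Umat (qtil mu p s) (rtil mu p s) (lam j) i0 i * s i0 j +
  Umat (qtil mu p s) (rtil mu p s) (lam j) i1 i * s i1 j +
  Umat (qtil mu p s) (rtil mu p s) (lam j) i2 i * s i2 j).
Proof. by rewrite [LHS]/= sum3 !UsynE mulN1r. Qed.

Ltac lexp := rewrite ?(LieA, LieM, LieC, LieX0, LieX1); rewrite ?(pevalA, pevalM, pevalC, pevalX0, pevalX1) ?mxE /=.

Lemma DA p s j : peval p s (Lie (Asyn j)) =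
  qtil mu p s * peval p s (Csyn j) - rtil mu p s * peval p s (Bsyn j).
Proof.
rewrite /Asyn /Bsyn /Csyn. lexp. ring.
Qed.

Lemma DB' p s j : peval p s (Lie (Bsyn j)) =
  - 2 * lam j * peval p s (Bsyn j) - Num.sqrt 2 * Num.sqrt 2 * qtil mu p s * peval p s (Asyn j).
Proof. rewrite /Asyn /Bsyn /Csyn. lexp. ring. Qed.

Lemma DC' p s j : peval p s (Lie (Csyn j)) =
  2 * lam j * peval p s (Csyn j) + Num.sqrt 2 * Num.sqrt 2 * rtil mu p s * peval p s (Asyn j).
Proof. rewrite /Asyn /Bsyn /Csyn. lexp. ring. Qed.

Lemma s2 : Num.sqrt 2 * Num.sqrt 2 = 2 :> R.
Proof. by rewrite -expr2 sqr_sqrtr // ler0n. Qed.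


Definition Ahat m := PS (fun j => PM (PC (mu j * lam j ^+ m)) (Asyn j)).
Definition Bhat m := PS (fun j => PM (PC (mu j * lam j ^+ m)) (Bsyn j)).
Definition Chat m := PS (fun j => PM (PC (mu j * lam j ^+ m)) (Csyn j)).

Lemma DAh p s m : peval p s (Lie (Ahat m)) =
  qtil mu p s * peval p s (Chat m) - rtil mu p s * peval p s (Bhat m).
Proof.
rewrite LieS !pevalS !mulr_sumr -sumrB; apply: eq_bigr => j _.
rewrite LieM LieC DA !pevalM !pevalC; ring.
Qed.

Lemma DBh p s m : peval p s (Lie (Bhat m)) =
  - 2 * peval p s (Bhat m.+1) - 2 * qtil mu p s * peval p s (Ahat m).
Proof.
rewrite LieS !pevalS !mulr_sumr -sumrB; apply: eq_bigr => j _.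
rewrite LieM LieC DB' s2 !pevalM !pevalC exprS; ring.
Qed.

Lemma DCh p s m : peval p s (Lie (Chat m)) =
  2 * peval p s (Chat m.+1) + 2 * rtil mu p s * peval p s (Ahat m).
Proof.
rewrite LieS !pevalS !mulr_sumr -big_split; apply: eq_bigr => j _.
rewrite LieM LieC DC' s2 !pevalM !pevalC exprS; rewrite /=; ring.
Qed.

Lemma Bh0 p s : peval p s (Bhat 0) = qtil mu p s.
Proof.
rewrite pevalS /qtil -big_split mulr_sumr; apply: eq_bigr => j _.
rewrite /Bsyn; lexp; ring.
Qed.

Lemma Ch0 p s : peval p s (Chat 0) = rtil mu p s.
Proof.
rewrite pevalS /rtil -big_split mulr_sumr; apply: eq_bigr => j _.
rewrite /Csyn; lexp; ring.
Qed.

Fixpoint tr (e : dpoly R) : pp :=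
  match e with
  | DC c => PC c
  | DQ k => iter k Lie qsyn
  | DR k => iter k Lie rsyn
  | DAdd x y => PA (tr x) (tr y)
  | DMul x y => PM (tr x) (tr y)
  end.

Definition Jz p s : jet R :=
  (fun k => peval p s (iter k Lie qsyn), fun k => peval p s (iter k Lie rsyn)).

Lemma tr_eval p s e : peval p s (tr e) = deval (Jz p s) e.
Proof. by elim: e => //= x -> y ->. Qed.

Lemma tr_deriv p s e : peval p s (tr (dderiv e)) = peval p s (Lie (tr e)).
Proof. by elim: e => //= x Hx y Hy; rewrite Hx Hy. Qed.

Lemma Jz10 p s : (Jz p s).1 0%N = qtil mu p s. Proof. reflexivity. Qed.
Lemma Jz20 p s : (Jz p s).2 0%N = rtil mu p s. Proof. reflexivity. Qed.


Lemma sol_deriv {phi psi : R -> phase R N} {x0 x1 : R} :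
  spatial_solution lam mu phi psi x0 x1 ->
  forall x, x0 < x < x1 -> forall e,
  is_derive x 1 (fun t => peval (phi t) (psi t) e) (peval (phi x) (psi x) (Lie e)).
Proof.
move=> Hs x Hx; apply: curve_deriv => -[] i j; have /= [d1 [d2 [e1 e2]]] := Hs x Hx i j.
- have := derivableP d2; rewrite -derive1E e2 => D.
  apply: is_derive_eq D _; rewrite [RHS]/= mulN1r; congr (- _).
  by apply: eq_bigr => k _; rewrite UsynE mxE.
- have := derivableP d1; rewrite -derive1E e1 => D.
  apply: is_derive_eq D _; rewrite [RHS]/=.
  by apply: eq_bigr => k _; rewrite UsynE.
Qed.

Lemma leaves {phi psi : R -> phase R N} {x0 x1 : R} :
  spatial_solution lam mu phi psi x0 x1 ->
  forall (e : pp) k x, x0 < x < x1 ->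
  derive1n k (fun t => peval (phi t) (psi t) e) x = peval (phi x) (psi x) (iter k Lie e).
Proof.
move=> Hs e k; elim: k => [//|k IH] x Hx.
rewrite [LHS]/= derive1E.
rewrite (@near_eq_derive _ _ _ _ (fun t => peval (phi t) (psi t) (iter k Lie e))).
  by have := sol_deriv Hs x Hx (iter k Lie e) => -[_ ->].
have Hx' : x \in `]x0, x1[ by rewrite in_itv /=.
have := near_in_itvoo Hx'; apply: filterS => t; rewrite in_itv /= => Ht.
exact: IH.
Qed.

Lemma jet_eq {phi psi : R -> phase R N} {x0 x1 : R} :
  spatial_solution lam mu phi psi x0 x1 ->
  forall x, x0 < x < x1 ->
  jet_at (fun x => qtil mu (phi x) (psi x)) (fun x => rtil mu (phi x) (psi x)) x = Jz (phi x) (psi x).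
Proof.
move=> Hs x Hx; rewrite /jet_at /Jz; congr pair; apply/funext => k.
- by rewrite -(leaves Hs qsyn k x Hx).
- by rewrite -(leaves Hs rsyn k x Hx).
Qed.

Lemma const_along {phi psi : R -> phase R N} {x0 x1 : R} (e : pp) :
  spatial_solution lam mu phi psi x0 x1 ->
  (forall p s, peval p s (Lie e) = 0) ->
  forall x y, x0 < x < x1 -> x0 < y < x1 ->
  peval (phi x) (psi x) e = peval (phi y) (psi y) e.
Proof.
move=> Hs H0.
have D : forall t, x0 < t < x1 -> is_derive t 1 (fun t => peval (phi t) (psi t) e) 0.
  move=> t Ht; have := sol_deriv Hs t Ht e; rewrite H0; exact.
suff W : forall x y, (x <= y) -> x0 < x < x1 -> x0 < y < x1 ->
  peval (phi x) (psi x) e = peval (phi y) (psi y) e.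
  move=> x y Hx Hy; case: (leP x y) => xy; first exact: W.
  by apply/esym/W => //; apply: ltW.
move=> x y xy /andP[Hx0 Hx1] /andP[Hy0 Hy1].
have P1 : forall t, t \in `]x, y[ -> is_derive t 1 (fun t => peval (phi t) (psi t) e) 0.
  move=> t; rewrite in_itv /= => /andP[t1 t2]; apply: D.
  by rewrite (lt_trans Hx0 t1) (lt_trans t2 Hy1).
have Hin : {in `[x, y]%R, forall t, derivable (fun t => peval (phi t) (psi t) e) t 1}.
  move=> t; rewrite in_itv /= => /andP[t1 t2].
  have Ht : x0 < t < x1 by rewrite (lt_le_trans Hx0 t1) (le_lt_trans t2 Hy1).
  by case: (D t Ht).
have [z _] := MVT_segment xy P1 (derivable_within_continuous Hin).
by rewrite mul0r => /eqP; rewrite subr_eq0 => /eqP.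
Qed.

Section Hier.
Variables a b c : nat -> dpoly R.
Hypothesis H : AKNS_hierarchy a b c.

Definition av i p s := peval p s (tr (a i)).
Definition bv i p s := peval p s (tr (b i)).
Definition cv i p s := peval p s (tr (c i)).
Definition Dav i p s := peval p s (Lie (tr (a i))).
Definition Dbv i p s := peval p s (Lie (tr (b i))).
Definition Dcv i p s := peval p s (Lie (tr (c i))).

Lemma a0 p s : av 0 p s = -1.
Proof. by case: H => Ha _; rewrite /av tr_eval. Qed.

Lemma Db0 p s : Dbv 0 p s = 0.
Proof.
case: H => _ [Hb _]; rewrite /Dbv -tr_deriv tr_eval.
by rewrite (@dderiv_resp R (b 0%N) (DC 0)).
Qed.

Lemma Dc0 p s : Dcv 0 p s = 0.
Proof.
case: H => _ [_ [Hc _]]; rewrite /Dcv -tr_deriv tr_eval.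
by rewrite (@dderiv_resp R (c 0%N) (DC 0)).
Qed.

Lemma bS i p s : bv i.+1 p s = - 2^-1 * Dbv i p s - qtil mu p s * av i p s.
Proof.
case: H => _ [_ [_ Hi]]; have [_ [Hb _]] := Hi i.
by rewrite /bv /Dbv /av -tr_deriv !tr_eval Hb.
Qed.

Lemma cS i p s : cv i.+1 p s = 2^-1 * Dcv i p s - rtil mu p s * av i p s.
Proof.
case: H => _ [_ [_ Hi]]; have [_ [_ [Hc _]]] := Hi i.
by rewrite /cv /Dcv /av -tr_deriv !tr_eval Hc.
Qed.

Lemma DaS0 i p s : Dav i.+1 p s = 2^-1 * (qtil mu p s * Dcv i p s + rtil mu p s * Dbv i p s).
Proof.
case: H => _ [_ [_ Hi]]; have [Ha _] := Hi i.
by rewrite /Dav /Dcv /Dbv -!tr_deriv !tr_eval Ha.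
Qed.

Lemma Db i p s : Dbv i p s = - 2 * bv i.+1 p s - 2 * qtil mu p s * av i p s.
Proof. rewrite bS; field; by rewrite ?pnatr_eq0 ?oner_eq0. Qed.

Lemma Dc i p s : Dcv i p s = 2 * cv i.+1 p s + 2 * rtil mu p s * av i p s.
Proof. rewrite cS; field; by rewrite ?pnatr_eq0 ?oner_eq0. Qed.

Lemma DaS i p s : Dav i.+1 p s = qtil mu p s * cv i.+1 p s - rtil mu p s * bv i.+1 p s.
Proof. rewrite DaS0 Db Dc; field; by rewrite ?pnatr_eq0 ?oner_eq0. Qed.

Lemma b1 p s : bv 1 p s = qtil mu p s.
Proof. by rewrite bS Db0 a0; ring. Qed.

Lemma c1 p s : cv 1 p s = rtil mu p s.
Proof. by rewrite cS Dc0 a0; ring. Qed.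


Definition newg m (sq : seq pp) : pp :=
  PM (PC (-1)) (PA (Ahat m) (PM (PC (-1))
     (PS (fun l : 'I_m.+1 => PM (nth (PC 0) sq l) (tr (a (m.+1 - l))))))).

Fixpoint gl m : seq pp :=
  match m with 0%N => [:: PC 1] | m'.+1 => rcons (gl m') (newg m' (gl m')) end.

Definition gam l := nth (PC 0) (gl l) l.

Lemma size_gl m : size (gl m) = m.+1.
Proof. by elim: m => //= m IH; rewrite size_rcons IH. Qed.

Lemma nth_gl m l : (l <= m)%N -> nth (PC 0) (gl m) l = gam l.
Proof.
elim: m => [|m IH] Hl; first by move: Hl; rewrite leqn0 => /eqP ->.
rewrite /= nth_rcons size_gl.
case: ltnP => Hlm; first by rewrite IH.
have -> : l = m.+1 by apply/eqP; rewrite eqn_leq Hl Hlm.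
by rewrite eqxx /gam /= nth_rcons size_gl ltnn eqxx.
Qed.

Lemma gamS m : gam m.+1 = newg m (gl m).
Proof. by rewrite /gam /= nth_rcons size_gl ltnn eqxx. Qed.

Definition gv l p s := peval p s (gam l).
Definition Dgv l p s := peval p s (Lie (gam l)).

Lemma gvS m p s : gv m.+1 p s =
  - (peval p s (Ahat m) - \sum_(l < m.+1) gv l p s * av (m.+1 - l) p s).
Proof.
rewrite /gv gamS /newg !pevalM !pevalA !pevalM !pevalC pevalS.
rewrite mulN1r mulN1r; congr (- (_ - _)); apply: eq_bigr => l _.
by rewrite pevalM nth_gl // -ltnS.
Qed.

Lemma DgvS m p s : Dgv m.+1 p s =
  - (peval p s (Lie (Ahat m)) - \sum_(l < m.+1) (Dgv l p s * av (m.+1 - l) p s + gv l p s * Dav (m.+1 - l) p s)).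
Proof.
rewrite /Dgv gamS /newg !LieM !LieA !LieM !LieC !pevalC LieS.
rewrite !mul0r !add0r mulN1r mulN1r; congr (- (_ - _)); apply: eq_bigr => l _.
by rewrite LieM nth_gl // -ltnS.
Qed.

Lemma core m :
  (forall l, (l <= m)%N -> forall p s, Dgv l p s = 0) /\
  (forall p s, peval p s (Bhat m) = \sum_(l < m.+1) gv l p s * bv (m.+1 - l) p s) /\
  (forall p s, peval p s (Chat m) = \sum_(l < m.+1) gv l p s * cv (m.+1 - l) p s).
Proof.
elim: m => [|m [IHa [IHb IHc]]].
  split; [|split].
  - by move=> l; rewrite leqn0 => /eqP -> p s.
  - by move=> p s; rewrite Bh0 big_ord1 /gv /= b1 mul1r.
  - by move=> p s; rewrite Ch0 big_ord1 /gv /= c1 mul1r.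
have HA : forall l, (l <= m.+1)%N -> forall p s, Dgv l p s = 0.
  move=> l; rewrite leq_eqVlt => /orP [/eqP -> p s|]; last by rewrite ltnS; exact: IHa.
  rewrite DgvS DAh IHb IHc.
  have -> : \sum_(l < m.+1) (Dgv l p s * av (m.+1 - l) p s + gv l p s * Dav (m.+1 - l) p s)
     = qtil mu p s * \sum_(l < m.+1) gv l p s * cv (m.+1 - l) p s
       - rtil mu p s * \sum_(l < m.+1) gv l p s * bv (m.+1 - l) p s.
    rewrite !mulr_sumr -sumrB; apply: eq_bigr => k _.
    have Hk : (k <= m)%N by rewrite -ltnS.
    rewrite IHa // (subSn Hk) DaS; ring.
  by rewrite subrr oppr0.
split; first exact: HA.
have HAk : forall (k : 'I_m.+1) p s, Dgv k p s = 0.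
  by move=> k p s; apply: HA; apply: ltnW; rewrite (ltn_ord k).
have E3 : forall p s, peval p s (Ahat m) =
   \sum_(l < m.+1) gv l p s * av (m.+1 - l) p s - gv m.+1 p s.
  by move=> p s; rewrite gvS; ring.
split.
- move=> p s.
  have E1 : peval p s (Bhat m.+1) = - 2^-1 * peval p s (Lie (Bhat m)) - qtil mu p s * peval p s (Ahat m).
    by rewrite DBh; field; rewrite ?pnatr_eq0 ?oner_eq0.
  have E2 : peval p s (Lie (Bhat m)) = \sum_(l < m.+1) gv l p s * Dbv (m.+1 - l) p s.
    rewrite (@Lie_resp (Bhat m) (PS (fun l : 'I_m.+1 => PM (gam l) (tr (b (m.+1 - l)))))).
      rewrite LieS; apply: eq_bigr => k _; rewrite LieM.
      by rewrite -/(Dgv k p s) HAk mul0r add0r.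
    by move=> p' s'; rewrite IHb pevalS.
  have E4 : \sum_(l < m.+1) gv l p s * Dbv (m.+1 - l) p s =
     - 2 * \sum_(l < m.+1) gv l p s * bv (m.+2 - l) p s
     - 2 * qtil mu p s * \sum_(l < m.+1) gv l p s * av (m.+1 - l) p s.
    rewrite !mulr_sumr -sumrB; apply: eq_bigr => k _.
    have Hk : (k <= m.+1)%N by apply: ltnW; rewrite (ltn_ord k).
    rewrite Db (subSn Hk); ring.
  rewrite E1 E2 E4 E3 [RHS]big_ord_recr /= subSnn b1.
  field; by rewrite ?pnatr_eq0 ?oner_eq0.
- move=> p s.
  have E1 : peval p s (Chat m.+1) = 2^-1 * peval p s (Lie (Chat m)) - rtil mu p s * peval p s (Ahat m).
    by rewrite DCh; field; rewrite ?pnatr_eq0 ?oner_eq0.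
  have E2 : peval p s (Lie (Chat m)) = \sum_(l < m.+1) gv l p s * Dcv (m.+1 - l) p s.
    rewrite (@Lie_resp (Chat m) (PS (fun l : 'I_m.+1 => PM (gam l) (tr (c (m.+1 - l)))))).
      rewrite LieS; apply: eq_bigr => k _; rewrite LieM.
      by rewrite -/(Dgv k p s) HAk mul0r add0r.
    by move=> p' s'; rewrite IHc pevalS.
  have E4 : \sum_(l < m.+1) gv l p s * Dcv (m.+1 - l) p s =
     2 * \sum_(l < m.+1) gv l p s * cv (m.+2 - l) p s
     + 2 * rtil mu p s * \sum_(l < m.+1) gv l p s * av (m.+1 - l) p s.
    rewrite !mulr_sumr -big_split; apply: eq_bigr => k _.
    have Hk : (k <= m.+1)%N by apply: ltnW; rewrite (ltn_ord k).
    rewrite Dc (subSn Hk) /=; ring.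
  rewrite E1 E2 E4 E3 [RHS]big_ord_recr /= subSnn c1.
  field; by rewrite ?pnatr_eq0 ?oner_eq0.
Qed.


Definition Pl : {poly R} := \prod_(k < N) ('X - (lam k)%:P).
Definition sig m := Pl`_m.

Lemma size_Pl : size Pl = N.+1.
Proof. by rewrite /Pl size_prod_XsubC /index_enum -enumT size_enum_ord. Qed.

Lemma sig_root j : \sum_(m < N.+1) sig m * lam j ^+ m = 0.
Proof.
rewrite -horner_coef_wide ?size_Pl //.
by rewrite /Pl horner_prod (bigD1 j) //= hornerXsubC subrr mul0r.
Qed.

Lemma sigN : sig N = 1.
Proof.
have := monic_prod_XsubC (index_enum 'I_N) xpredT lam.
by rewrite -/Pl monicE lead_coefE size_Pl => /eqP.
Qed.

Definition delta n p s := \sum_(m < N.+1) (if (n < m.+1)%N then sig m * gv (m - n) p s else 0).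

Lemma final_b p s : \sum_(n < N.+1) delta n p s * bv n.+1 p s = 0.
Proof.
have S1 : \sum_(m < N.+1) sig m * peval p s (Bhat m) = 0.
  under eq_bigr do rewrite pevalS mulr_sumr.
  rewrite exchange_big /=; apply: big1 => j _.
  transitivity (mu j * peval p s (Bsyn j) * \sum_(m < N.+1) sig m * lam j ^+ m);
    last by rewrite sig_root mulr0.
  rewrite mulr_sumr; apply: eq_bigr => m _; rewrite pevalM pevalC; rewrite /Bsyn; lexp; ring.
rewrite -[RHS]S1.
under eq_bigr do rewrite /delta mulr_suml.
rewrite exchange_big; apply: eq_bigr => m _.
have [_ [HB _]] := core m.
rewrite HB.
transitivity (\sum_(i < N.+1 | (i < m.+1)%N) sig m * gv (m - i) p s * bv i.+1 p s).
  rewrite [RHS]big_mkcond; apply: eq_bigr => i _; by case: ifP => _; rewrite ?mul0r.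
rewrite -(big_ord_widen N.+1 (fun i => sig m * gv (m - i) p s * bv i.+1 p s)) ?ltn_ord //.
rewrite mulr_sumr (reindex_inj rev_ord_inj) /=; apply: eq_bigr => l _.
have Hl : (l <= m)%N by rewrite -ltnS ltn_ord.
by rewrite subSS subKn // -subSn // mulrA.
Qed.
Lemma final_c p s : \sum_(n < N.+1) delta n p s * cv n.+1 p s = 0.
Proof.
have S1 : \sum_(m < N.+1) sig m * peval p s (Chat m) = 0.
  under eq_bigr do rewrite pevalS mulr_sumr.
  rewrite exchange_big /=; apply: big1 => j _.
  transitivity (mu j * peval p s (Csyn j) * \sum_(m < N.+1) sig m * lam j ^+ m);
    last by rewrite sig_root mulr0.
  rewrite mulr_sumr; apply: eq_bigr => m _; rewrite pevalM pevalC; rewrite /Csyn; lexp; ring.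
rewrite -[RHS]S1.
under eq_bigr do rewrite /delta mulr_suml.
rewrite exchange_big; apply: eq_bigr => m _.
have [_ [_ HB]] := core m.
rewrite HB.
transitivity (\sum_(i < N.+1 | (i < m.+1)%N) sig m * gv (m - i) p s * cv i.+1 p s).
  rewrite [RHS]big_mkcond; apply: eq_bigr => i _; by case: ifP => _; rewrite ?mul0r.
rewrite -(big_ord_widen N.+1 (fun i => sig m * gv (m - i) p s * cv i.+1 p s)) ?ltn_ord //.
rewrite mulr_sumr (reindex_inj rev_ord_inj) /=; apply: eq_bigr => l _.
have Hl : (l <= m)%N by rewrite -ltnS ltn_ord.
by rewrite subSS subKn // -subSn // mulrA.
Qed.

Definition Dsyn n := PS (fun m : 'I_N.+1 => if (n < m.+1)%N then PM (PC (sig m)) (gam (m - n)) else PC 0).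

Lemma delta_syn n p s : delta n p s = peval p s (Dsyn n).
Proof. by rewrite pevalS; apply: eq_bigr => m _; case: ifP. Qed.

Lemma Dsyn_const n p s : peval p s (Lie (Dsyn n)) = 0.
Proof.
rewrite LieS; apply: big1 => m _; case: ifP => _; last by rewrite LieC.
rewrite LieM LieC -/(Dgv (m - n) p s).
have [Ha _] := core (m - n).
by rewrite Ha // mulr0 mul0r addr0.
Qed.

Lemma delta_N p s : delta N p s = 1.
Proof.
rewrite /delta big_ord_recr /= big1 ?add0r.
  by rewrite ltnSn subnn sigN mul1r.
move=> m _; case: ifP => //; rewrite ltnS => Hm.
by move: (ltn_ord m); rewrite ltnNge Hm.
Qed.

Lemma main_concl : exists alpha : 'I_N -> (phase R N -> phase R N -> R),
    (forall k, integral_of_motion lam mu (alpha k)) /\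
    forall (phi psi : R -> phase R N) (x0 x1 : R),
      spatial_solution lam mu phi psi x0 x1 ->
      let q := fun x => qtil mu (phi x) (psi x) in
      let r := fun x => rtil mu (phi x) (psi x) in
      forall x, x0 < x < x1 ->
        K1 b N (jet_at q r x)
          + \sum_(k < N) alpha k (phi x) (psi x) * K1 b k (jet_at q r x) = 0 /\
        K2 c N (jet_at q r x)
          + \sum_(k < N) alpha k (phi x) (psi x) * K2 c k (jet_at q r x) = 0.
Proof.
exists (fun k p s => delta k p s); split.
  move=> k phi psi x0 x1 Hs x y Hx Hy; rewrite !delta_syn.
  exact: (const_along (Dsyn k) Hs (Dsyn_const k)).
move=> phi psi x0 x1 Hs q r x Hx; rewrite /q /r (jet_eq Hs x Hx) /K1 /K2.
split.
- under eq_bigr do rewrite -tr_eval.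
  rewrite -tr_eval.
  transitivity (-2 * \sum_(n < N.+1) delta n (phi x) (psi x) * bv n.+1 (phi x) (psi x));
    last by rewrite final_b mulr0.
  rewrite big_ord_recr /= delta_N mulrDr mulr_sumr [RHS]addrC /bv mul1r; congr (_ + _).
  by apply: eq_bigr => k _; ring.
- under eq_bigr do rewrite -tr_eval.
  rewrite -tr_eval.
  transitivity (2 * \sum_(n < N.+1) delta n (phi x) (psi x) * cv n.+1 (phi x) (psi x));
    last by rewrite final_c mulr0.
  rewrite big_ord_recr /= delta_N mulrDr mulr_sumr [RHS]addrC /cv mul1r; congr (_ + _).
  by apply: eq_bigr => k _; ring.
Qed.
End Hier.
End PP.




Theorem theorem4p2 (R : realType) (N : nat) (lam mu : 'I_N -> R)
    (a b c : nat -> dpoly R) :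
  (1 <= N)%N ->
  injective lam ->
  (forall j, mu j != 0) ->
  AKNS_hierarchy a b c ->
  exists alpha : 'I_N -> (phase R N -> phase R N -> R),
    (forall k, integral_of_motion lam mu (alpha k)) /\
    forall (phi psi : R -> phase R N) (x0 x1 : R),
      spatial_solution lam mu phi psi x0 x1 ->
      let q := fun x => qtil mu (phi x) (psi x) in
      let r := fun x => rtil mu (phi x) (psi x) in
      forall x, x0 < x < x1 ->
        K1 b N (jet_at q r x)
          + \sum_(k < N) alpha k (phi x) (psi x) * K1 b k (jet_at q r x) = 0 /\
        K2 c N (jet_at q r x)
          + \sum_(k < N) alpha k (phi x) (psi x) * K2 c k (jet_at q r x) = 0.
Proof.
move=> _ _ _ H.
exact: (@main_concl R N lam mu a b c H).
Qed.
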